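(* Let $\psi:\mathbb{R}_{\geq 0}\to\mathbb{R}$ be a neighbor function. Then for any $x,y,t$ with $0\leq x<y$ and $t\geq 0$: (1) $\psi^{-1}$ exists and is increasing; (2) $|\psi(y+t)-\psi(x+t)|\leq|\psi(y)-\psi(x)|$; (3) $|I_{\psi,t}(y)|\geq|I_{\psi,t}(x)|$; (4) $\dfrac{|I_{\psi,t}(y)|}{y}\leq\dfrac{|I_{\psi,t}(x)|}{x}$.
   Context: A neighbor function is a function $\psi:\mathbb{R}_{\geq 0}\to\mathbb{R}$ that is (i) strictly increasing, (ii) continuous, (iii) concave, and (iv) such that $g(x)=\psi(e^{x})$ is convex as a function of $x\in\mathbb{R}$. For a neighbor function $\psi$, a number $\sigma\geq 0$ and $y\geq 0$, the uncertainty interval around $y$ is $I_{\psi,\sigma}(y)=[L,U]$ with $L=\psi^{-1}\big(\max(\psi(0),\psi(y)-\sigma)\big)$ and $U=\psi^{-1}\big(\psi(y)+\sigma\big)$; its length is $|I_{\psi,\sigma}(y)|=U-L$. *)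

(* Defs.v *)
From Stdlib Require Import Reals Lra ClassicalEpsilon.
Open Scope R_scope.

(* psi : R -> R is only considered on the domain [0, +oo). *)

Definition strictly_increasing_nonneg (psi : R -> R) : Prop :=
  forall x y, 0 <= x -> x < y -> psi x < psi y.

Definition continuous_nonneg (psi : R -> R) : Prop :=
  forall x, 0 <= x -> forall eps, 0 < eps ->
    exists delta, 0 < delta /\
      forall y, 0 <= y -> Rabs (y - x) < delta -> Rabs (psi y - psi x) < eps.

Definition concave_nonneg (psi : R -> R) : Prop :=
  forall x y l, 0 <= x -> 0 <= y -> 0 <= l <= 1 ->
    l * psi x + (1 - l) * psi y <= psi (l * x + (1 - l) * y).

Definition convex_R (g : R -> R) : Prop :=
  forall a b l, 0 <= l <= 1 ->
    g (l * a + (1 - l) * b) <= l * g a + (1 - l) * g b.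

Definition neighbor_function (psi : R -> R) : Prop :=
  strictly_increasing_nonneg psi /\ continuous_nonneg psi /\
  concave_nonneg psi /\ convex_R (fun x => psi (exp x)).

(* psi^{-1}(v): a (the, when it exists) x >= 0 with psi x = v. *)
Definition psi_inv (psi : R -> R) (v : R) : R :=
  epsilon (inhabits 0) (fun x => 0 <= x /\ psi x = v).

Definition I_low (psi : R -> R) (sigma y : R) : R :=
  psi_inv psi (Rmax (psi 0) (psi y - sigma)).
Definition I_up (psi : R -> R) (sigma y : R) : R :=
  psi_inv psi (psi y + sigma).
Definition I_len (psi : R -> R) (sigma y : R) : R :=
  I_up psi sigma y - I_low psi sigma y.

(* Main.v *)
Require Import Defs.
From Stdlib Require Import Reals Lra ClassicalEpsilon.
Open Scope R_scope.

Lemma div_nonneg a b : 0 <= a -> 0 < b -> 0 <= a / b.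
Proof. intros. unfold Rdiv; apply Rmult_le_pos; [lra| left; apply Rinv_0_lt_compat; lra]. Qed.
Lemma div_le1 a b : a <= b -> 0 < b -> a / b <= 1.
Proof. intros. apply (Rmult_le_reg_r b); [lra|]. replace (a / b * b) with a by (field; lra). lra. Qed.
Lemma one_le_div a b : b <= a -> 0 < b -> 1 <= a / b.
Proof. intros. apply (Rmult_le_reg_r b); [lra|]. replace (a / b * b) with a by (field; lra). lra. Qed.

Lemma incr_gen (D : R -> Prop) (f : R -> R)
  (Hc : forall a b l, D a -> D b -> 0 <= l <= 1 ->
        f (l * a + (1 - l) * b) <= l * f a + (1 - l) * f b)
  A B s : D A -> D (B + s) -> A <= B -> 0 <= s ->
  f (A + s) + f B <= f A + f (B + s).
Proof.
  intros DA DB HAB Hs.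
  destruct (Req_dec (B - A + s) 0) as [H0|H0].
  { assert (B = A) by lra. assert (s = 0) by lra. subst.
    replace (A + 0) with A by ring. lra. }
  set (l := (B - A) / (B - A + s)).
  assert (Hl : 0 <= l <= 1).
  { unfold l; split.
    - apply div_nonneg; lra.
    - apply div_le1; lra. }
  assert (H1 := Hc A (B + s) l DA DB Hl).
  assert (H2 := Hc A (B + s) (1 - l) DA DB ltac:(lra)).
  replace (l * A + (1 - l) * (B + s)) with (A + s) in H1 by (unfold l; field; lra).
  replace ((1 - l) * A + (1 - (1 - l)) * (B + s)) with B in H2 by (unfold l; field; lra).
  lra.
Qed.

Lemma Rmax_lip x y : Rabs (Rmax 0 y - Rmax 0 x) <= Rabs (y - x).
Proof.
  unfold Rmax; destruct (Rle_dec 0 y), (Rle_dec 0 x); unfold Rabs;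
  repeat destruct Rcase_abs; lra.
Qed.

Section S.
Variable psi : R -> R.
Hypothesis Hpsi : neighbor_function psi.

Lemma inc : forall x y, 0 <= x -> x < y -> psi x < psi y.
Proof. apply Hpsi. Qed.

Lemma incw x y : 0 <= x -> x <= y -> psi x <= psi y.
Proof. intros. destruct (Req_dec x y). subst; lra. left; apply inc; lra. Qed.

Lemma inv_le p q : 0 <= q -> psi p <= psi q -> p <= q.
Proof. intros Hq H. destruct (Rle_lt_dec p q); auto.
  assert (psi q < psi p) by (apply inc; auto; lra). lra. Qed.

Lemma concave_incr A B s : 0 <= A -> A <= B -> 0 <= s ->
  psi A + psi (B + s) <= psi (A + s) + psi B.
Proof.
  intros HA HAB Hs. destruct Hpsi as [_ [_ [Hc _]]].
  assert (H := incr_gen (fun x => 0 <= x) (fun x => - psi x)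
    ltac:(intros a b l Ha Hb Hl; specialize (Hc a b l Ha Hb Hl); lra) A B s
    ltac:(simpl; lra) ltac:(simpl; lra) HAB Hs).
  simpl in H. lra.
Qed.

Lemma mult_incr p q r : 0 < p -> p <= q -> 1 <= r ->
  psi (r * p) + psi q <= psi p + psi (r * q).
Proof.
  intros Hp Hpq Hr. destruct Hpsi as [_ [_ [_ Hg]]].
  assert (Hlpq : ln p <= ln q).
  { destruct (Req_dec p q). subst; lra. left; apply ln_increasing; lra. }
  assert (Hlr : 0 <= ln r).
  { rewrite <- ln_1. destruct (Req_dec 1 r). subst; lra. left; apply ln_increasing; lra. }
  assert (H := incr_gen (fun _ => True) (fun x => psi (exp x))
    ltac:(intros a b l _ _ Hl; apply Hg; auto) (ln p) (ln q) (ln r) I I Hlpq Hlr).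
  simpl in H. rewrite !exp_plus, !exp_ln in H by lra.
  replace (r * p) with (p * r) by ring. replace (r * q) with (q * r) by ring. lra.
Qed.

Lemma unbounded v : exists M, 0 <= M /\ v < psi M.
Proof.
  destruct Hpsi as [_ [_ [_ Hg]]].
  set (g0 := psi (exp 0)). set (g1 := psi (exp 1)).
  assert (Hd : g0 < g1).
  { unfold g0, g1. apply inc. left; apply exp_pos. apply exp_increasing; lra. }
  set (s := Rmax 1 ((v - g0) / (g1 - g0) + 1)).
  assert (Hs1 : 1 <= s) by apply Rmax_l.
  assert (Hs2 : (v - g0) / (g1 - g0) + 1 <= s) by apply Rmax_r.
  assert (H := Hg s 0 (1 / s) ltac:(split; [apply div_nonneg|apply div_le1]; lra)).
  simpl in H.
  replace (1 / s * s + (1 - 1 / s) * 0) with 1 in H by (field; lra).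
  fold g0 g1 in H.
  exists (exp s). split. left; apply exp_pos.
  assert (Hk : s * g1 <= psi (exp s) + (s - 1) * g0).
  { apply Rmult_le_compat_l with (r := s) in H; [|lra].
    replace (s * (1 / s * psi (exp s) + (1 - 1 / s) * g0)) with (psi (exp s) + (s - 1) * g0) in H
      by (field; lra). lra. }
  assert (Hq : v - g0 < s * (g1 - g0)).
  { assert ((v - g0) / (g1 - g0) < s) by lra.
    apply Rmult_lt_compat_r with (r := g1 - g0) in H0; [|lra].
    replace ((v - g0) / (g1 - g0) * (g1 - g0)) with (v - g0) in H0 by (field; lra). lra. }
  lra.
Qed.

Lemma exists_pre v : psi 0 <= v -> exists x, 0 <= x /\ psi x = v.
Proof.
  intros Hv. destruct (Req_dec v (psi 0)) as [E|E].
  { exists 0; split; lra. }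
  destruct (unbounded v) as [M [HM HvM]].
  destruct Hpsi as [_ [Hcont _]].
  set (F := fun x => psi (Rmax 0 x) - v).
  assert (HF : continuity F).
  { intros x. unfold continuity_pt, continue_in, limit1_in, limit_in.
    intros eps Heps. destruct (Hcont (Rmax 0 x) (Rmax_l _ _) eps Heps) as [d [Hd Hdd]].
    exists d; split; auto. intros y [_ Hy]. simpl in *. unfold R_dist in *.
    unfold F. replace (psi (Rmax 0 y) - v - (psi (Rmax 0 x) - v))
      with (psi (Rmax 0 y) - psi (Rmax 0 x)) by ring.
    apply Hdd. apply Rmax_l. eapply Rle_lt_trans; [apply Rmax_lip|]. auto. }
  assert (HM0 : 0 < M).
  { destruct (Req_dec M 0). subst. lra. lra. }
  destruct (IVT F 0 M HF HM0) as [z [Hz Fz]].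
  { unfold F. rewrite Rmax_left by lra. lra. }
  { unfold F. rewrite Rmax_right by lra. lra. }
  exists z. unfold F in Fz. rewrite Rmax_right in Fz by lra. split; lra.
Qed.

Lemma inv_spec v : psi 0 <= v -> 0 <= psi_inv psi v /\ psi (psi_inv psi v) = v.
Proof.
  intros Hv. unfold psi_inv. apply epsilon_spec. apply exists_pre; auto.
Qed.

Lemma inj x y : 0 <= x -> 0 <= y -> psi x = psi y -> x = y.
Proof. intros. apply Rle_antisym; apply inv_le; lra. Qed.

End S.

Theorem theorem5p3 (psi : R -> R) (Hpsi : neighbor_function psi) :
  (* (1) psi^{-1} exists on [psi 0, +oo) and is increasing *)
  ((forall v, psi 0 <= v -> 0 <= psi_inv psi v /\ psi (psi_inv psi v) = v) /\
   (forall x, 0 <= x -> psi_inv psi (psi x) = x) /\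
   (forall u v, psi 0 <= u -> u < v -> psi_inv psi u < psi_inv psi v)) /\
  (forall x y t, 0 <= x -> x < y -> 0 <= t ->
     (* (2) *)
     Rabs (psi (y + t) - psi (x + t)) <= Rabs (psi y - psi x) /\
     (* (3) *)
     I_len psi t x <= I_len psi t y /\
     (* (4), meaningful only for x > 0 *)
     (0 < x -> I_len psi t y / y <= I_len psi t x / x)).
Proof.
  split; [split; [|split]|].
  - apply inv_spec; auto.
  - intros x Hx. assert (Hv : psi 0 <= psi x) by (apply incw; auto; lra).
    destruct (inv_spec psi Hpsi _ Hv) as [H1 H2]. apply inj with psi; auto.
  - intros u v Hu Huv.
    destruct (inv_spec psi Hpsi u Hu) as [H1 H2].
    destruct (inv_spec psi Hpsi v ltac:(lra)) as [H3 H4].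
    destruct (Rlt_le_dec (psi_inv psi u) (psi_inv psi v)); auto.
    assert (psi (psi_inv psi v) <= psi (psi_inv psi u)) by (apply incw; auto). lra.
  - intros x y t Hx Hxy Ht.
    assert (Hpxy : psi x < psi y) by (apply inc; auto).
    assert (Hp0x : psi 0 <= psi x) by (apply incw; auto; lra).
    assert (Hc := concave_incr psi Hpsi x y t Hx ltac:(lra) Ht).
    assert (Hxt : psi (x + t) <= psi (y + t)) by (apply incw; auto; lra).
    unfold I_len, I_up, I_low.
    destruct (inv_spec psi Hpsi (psi x + t) ltac:(lra)) as [Ha0 Ha].
    destruct (inv_spec psi Hpsi (psi y + t) ltac:(lra)) as [Hb0 Hb].
    destruct (inv_spec psi Hpsi (Rmax (psi 0) (psi x - t)) (Rmax_l _ _)) as [He0 He].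
    destruct (inv_spec psi Hpsi (Rmax (psi 0) (psi y - t)) (Rmax_l _ _)) as [Hc0 Hcc].
    set (a := psi_inv psi (psi x + t)) in *.
    set (b := psi_inv psi (psi y + t)) in *.
    set (e := psi_inv psi (Rmax (psi 0) (psi x - t))) in *.
    set (c := psi_inv psi (Rmax (psi 0) (psi y - t))) in *.
    assert (Hax : x <= a) by (apply inv_le with psi; auto; lra).
    assert (Hex : e <= x).
    { apply inv_le with psi; auto. rewrite He. unfold Rmax; destruct Rle_dec; lra. }
    assert (Hec : e <= c).
    { apply inv_le with psi; auto. rewrite He, Hcc. unfold Rmax; repeat destruct Rle_dec; lra. }
    split; [|split].
    + rewrite !Rabs_right by lra. lra.
    + assert (HU : y + (a - x) <= b).
      { apply inv_le with psi; auto.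
        assert (H := concave_incr psi Hpsi x y (a - x) Hx ltac:(lra) ltac:(lra)).
        replace (x + (a - x)) with a in H by ring. lra. }
      assert (HL : c + (x - e) <= y).
      { apply inv_le with psi; auto. lra.
        assert (H := concave_incr psi Hpsi e c (x - e) He0 Hec ltac:(lra)).
        replace (e + (x - e)) with x in H by ring.
        assert (psi x - psi e <= psi y - psi c).
        { rewrite He, Hcc. unfold Rmax; repeat destruct Rle_dec; lra. }
        lra. }
      lra.
    + intros Hx0.
      assert (Hy0 : 0 < y) by lra.
      assert (HU : b * x <= a * y).
      { assert (H := mult_incr psi Hpsi x y (a / x) Hx0 ltac:(lra)
          ltac:(apply one_le_div; lra)).
        replace (a / x * x) with a in H by (field; lra).
        assert (b <= a / x * y).
        { apply inv_le with psi; auto.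
          apply Rmult_le_pos; [apply div_nonneg|]; lra. lra. }
        apply Rmult_le_compat_r with (r := x) in H0; [|lra].
        replace (a / x * y * x) with (a * y) in H0 by (field; lra). lra. }
      assert (HL : e * y <= c * x).
      { destruct (Req_dec e 0) as [E|E].
        { rewrite E. assert (0 <= c * x) by (apply Rmult_le_pos; lra). lra. }
        assert (He1 : 0 < e) by lra.
        assert (Hpe : psi e = psi x - t).
        { assert (psi 0 < psi e) by (apply inc; auto; lra).
          revert He H. unfold Rmax; destruct Rle_dec; lra. }
        assert (H := mult_incr psi Hpsi e (y * e / x) (x / e) He1
          ltac:(apply (Rmult_le_reg_r x); [lra|];
                replace (y * e / x * x) with (y * e) by (field; lra); nra)
          ltac:(apply one_le_div; lra)).
        replace (x / e * e) with x in H by (field; lra).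
        replace (x / e * (y * e / x)) with y in H by (field; lra).
        assert (y * e / x <= c).
        { apply inv_le with psi; auto. rewrite Hcc.
          assert (psi y - t <= Rmax (psi 0) (psi y - t)) by apply Rmax_r. lra. }
        apply Rmult_le_compat_r with (r := x) in H0; [|lra].
        replace (y * e / x * x) with (e * y) in H0 by (field; lra). lra. }
      apply (Rmult_le_reg_r (x * y)). apply Rmult_lt_0_compat; lra.
      replace ((b - c) / y * (x * y)) with (b * x - c * x) by (field; lra).
      replace ((a - e) / x * (x * y)) with (a * y - e * y) by (field; lra).
      lra.
Qed.
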